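(* Let $K$ be a compact subset of $\mathbb R^d$, let $A\subset K$ be a Borel set, let $\mu\in\mathcal P(K)$ and $r>0$. Then $$\int_A\log\mu(B(x,2r))\,d\mu(x)\ge-\mu(A(r))\log\mathbf N_r(A)-e^{-1}.$$
   Context: $\mathcal P(K)$ is the set of Borel probability measures on $K$, $B(x,r)$ the open ball, $A(r)=\{x\in K:\operatorname{dist}(x,A)<r\}$, and $\mathbf N_r(A)$ the smallest number of balls of radius $r$ needed to cover $A$. *)

(* Defs.v *)
From HB Require Import structures.
From mathcomp Require Import all_boot all_order all_algebra.
From mathcomp Require Import all_classical all_reals all_analysis.
Set Implicit Arguments. Unset Strict Implicit. Unset Printing Implicit Defensive.
Import Order.TTheory GRing.Theory Num.Theory.
Import numFieldNormedType.Exports.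
Local Open Scope classical_set_scope.
Local Open Scope ring_scope.

Definition Rd (R : realType) (d : nat) := g_sigma_algebraType (@open ('rV[R]_d)).

Definition edist {R : realType} {d : nat} (x y : 'rV[R]_d) : R :=
  Num.sqrt (\sum_(i < d) (x ord0 i - y ord0 i) ^+ 2).

Definition eball {R : realType} {d : nat} (x : 'rV[R]_d) (r : R) : set (Rd R d) :=
  [set y | edist x y < r].

(* A(r) = {x in K : dist(x,A) < r}; dist(x,A) < r iff some a in A has |x-a| < r
   (and dist(x, empty) = +oo). *)
Definition nbhdK {R : realType} {d : nat} (K A : set 'rV[R]_d) (r : R) : set (Rd R d) :=
  [set x | K x /\ exists2 a, A a & edist x a < r].

(* A can be covered by n open balls of radius r (of the metric space K,
   i.e. centered at points of K). *)
Definition covers_by {R : realType} {d : nat} (K A : set 'rV[R]_d) (r : R) (n : nat) :=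
  exists c : 'I_n -> 'rV[R]_d,
    (forall i, K (c i)) /\ A `<=` \bigcup_(i in setT) (eball (c i) r : set 'rV[R]_d).

(* N_r(A): the smallest number of such balls needed to cover A
   (defaults to 0 if no finite cover exists, which never happens for A in a compact K). *)
Definition Ncov {R : realType} {d : nat} (K A : set 'rV[R]_d) (r : R) : nat :=
  match pselect (exists n, `[< covers_by K A r n >]) with
  | left h => ex_minn h
  | right _ => 0%N
  end.

(* Main.v *)
Require Import Defs.
From HB Require Import structures.
From mathcomp Require Import all_boot all_order all_algebra.
From mathcomp Require Import all_classical all_reals all_analysis.
From mathcomp Require Import ring lra.
From mathcomp Require Import measurable_realfun.
Import Order.TTheory GRing.Theory Num.Theory.
Import numFieldNormedType.Exports.
Local Open Scope classical_set_scope.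
Local Open Scope ring_scope.
Section Eucl.
Variables (R : realType).

Lemma sum_sq_expand (I : Type) (r : seq I) (a b : I -> R) (u v : R) :
  \sum_(i <- r) (u * a i - v * b i) ^+ 2 =
  u ^+ 2 * \sum_(i <- r) a i ^+ 2 - (2 * u * v) * \sum_(i <- r) a i * b i
  + v ^+ 2 * \sum_(i <- r) b i ^+ 2.
Proof.
rewrite !mulr_sumr -sumrB -big_split /=; apply: eq_bigr => i _; ring.
Qed.

Lemma sq_le_sum (I : eqType) (r : seq I) (a : I -> R) j : j \in r ->
  a j ^+ 2 <= \sum_(i <- r) a i ^+ 2.
Proof.
elim: r => [//|h t IH]; rewrite inE big_cons => /orP[/eqP->|jt].
  by rewrite lerDl sumr_ge0 // => i _; rewrite sqr_ge0.
by rewrite (le_trans (IH jt)) // lerDr sqr_ge0.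
Qed.

Lemma CS (I : finType) (a b : I -> R) :
  \sum_i a i * b i <= Num.sqrt (\sum_i a i ^+ 2) * Num.sqrt (\sum_i b i ^+ 2).
Proof.
set A := \sum_i a i ^+ 2; set B := \sum_i b i ^+ 2; set S := \sum_i a i * b i.
have A0 : 0 <= A by rewrite sumr_ge0 // => i _; rewrite sqr_ge0.
have B0 : 0 <= B by rewrite sumr_ge0 // => i _; rewrite sqr_ge0.
have sA0 := sqrtr_ge0 A; have sB0 := sqrtr_ge0 B.
have E := @sum_sq_expand I (index_enum I) a b (Num.sqrt B) (Num.sqrt A).
rewrite -/A -/B -/S !sqr_sqrtr // in E.
have H0 : 0 <= \sum_i (Num.sqrt B * a i - Num.sqrt A * b i) ^+ 2.
  by rewrite sumr_ge0 // => i _; rewrite sqr_ge0.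
rewrite E in H0.
have [P|P] := ltP 0 (Num.sqrt A * Num.sqrt B).
  have : (Num.sqrt A * Num.sqrt B) * S <= (Num.sqrt A * Num.sqrt B) * (Num.sqrt A * Num.sqrt B).
    have -> : (Num.sqrt A * Num.sqrt B) * (Num.sqrt A * Num.sqrt B) = A * B.
      have -> : (Num.sqrt A * Num.sqrt B) * (Num.sqrt A * Num.sqrt B) = Num.sqrt A ^+ 2 * Num.sqrt B ^+ 2 by ring.
      by rewrite !sqr_sqrtr.
    lra.
  by rewrite ler_pM2l.
have P0 : Num.sqrt A * Num.sqrt B = 0 by apply/eqP; rewrite eq_le P mulr_ge0.
have : S = 0.
  move/eqP: P0; rewrite mulf_eq0 !sqrtr_eq0 => /orP[].
    move=> Az'; have Az : A = 0 by apply/eqP; rewrite eq_le Az' A0. rewrite /S big1 // => i _.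
    have : a i ^+ 2 <= 0 by rewrite -Az sq_le_sum // mem_index_enum.
    move=> H; have : a i ^+ 2 == 0 by rewrite eq_le H sqr_ge0.
    rewrite sqrf_eq0 => /eqP ->; by rewrite mul0r.
  move=> Bz'; have Bz : B = 0 by apply/eqP; rewrite eq_le Bz' B0. rewrite /S big1 // => i _.
  have : b i ^+ 2 <= 0 by rewrite -Bz sq_le_sum // mem_index_enum.
  move=> H; have : b i ^+ 2 == 0 by rewrite eq_le H sqr_ge0.
  by rewrite sqrf_eq0 => /eqP ->; rewrite mulr0.
by move=> ->; rewrite P0.
Qed.

Lemma minkowski (I : finType) (a b : I -> R) :
  Num.sqrt (\sum_i (a i + b i) ^+ 2) <=
  Num.sqrt (\sum_i a i ^+ 2) + Num.sqrt (\sum_i b i ^+ 2).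
Proof.
set A := \sum_i a i ^+ 2; set B := \sum_i b i ^+ 2.
have A0 : 0 <= A by rewrite sumr_ge0 // => i _; rewrite sqr_ge0.
have B0 : 0 <= B by rewrite sumr_ge0 // => i _; rewrite sqr_ge0.
have sA0 := sqrtr_ge0 A; have sB0 := sqrtr_ge0 B.
rewrite -(ger0_norm (addr_ge0 sA0 sB0)) -sqrtr_sqr ler_wsqrtr //.
have -> : \sum_i (a i + b i) ^+ 2 = A + 2 * \sum_i a i * b i + B.
  rewrite /A /B mulr_sumr -!big_split /=; apply: eq_bigr => i _; ring.
have := @CS I a b; rewrite -/A -/B => H.
have -> : (Num.sqrt A + Num.sqrt B) ^+ 2 = A + 2 * (Num.sqrt A * Num.sqrt B) + B.
  have -> : (Num.sqrt A + Num.sqrt B) ^+ 2 = Num.sqrt A ^+ 2 + 2 * (Num.sqrt A * Num.sqrt B) + Num.sqrt B ^+ 2 by ring.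
  by rewrite !sqr_sqrtr.
lra.
Qed.

Lemma sq_le_abs_sum (I : Type) (r : seq I) (a : I -> R) :
  \sum_(i <- r) a i ^+ 2 <= (\sum_(i <- r) `|a i|) ^+ 2.
Proof.
elim: r => [|h t IH]; first by rewrite !big_nil expr0n.
rewrite !big_cons.
have s0 : 0 <= \sum_(i <- t) `|a i| by rewrite sumr_ge0.
have : a h ^+ 2 = `|a h| ^+ 2 by rewrite real_normK // num_real.
have := normr_ge0 (a h).
nra.
Qed.

Variable d : nat.
Implicit Types x y z : 'rV[R]_d.

Lemma edist_triangle x y z : Defs.edist x z <= Defs.edist x y + Defs.edist y z.
Proof.
rewrite /Defs.edist.
have -> : \sum_(i < d) (x ord0 i - z ord0 i) ^+ 2 =
  \sum_(i < d) ((x ord0 i - y ord0 i) + (y ord0 i - z ord0 i)) ^+ 2.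
  by apply: eq_bigr => i _; congr (_ ^+ 2); ring.
exact: minkowski.
Qed.

Lemma edistC x y : Defs.edist x y = Defs.edist y x.
Proof. by rewrite /Defs.edist; congr Num.sqrt; apply: eq_bigr => i _; ring. Qed.

Lemma edistxx x : Defs.edist x x = 0.
Proof. by rewrite /Defs.edist big1 ?sqrtr0 // => i _; rewrite subrr expr0n. Qed.

Lemma edist_ge0 x y : 0 <= Defs.edist x y.
Proof. exact: sqrtr_ge0. Qed.

Lemma edist_le_sum x y : Defs.edist x y <= \sum_(i < d) `|x ord0 i - y ord0 i|.
Proof.
rewrite /Defs.edist -(ger0_norm (sumr_ge0 _ (fun i _ => normr_ge0 (x ord0 i - y ord0 i)))).
by rewrite -sqrtr_sqr ler_wsqrtr // sq_le_abs_sum.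
Qed.

Lemma edist_ball x y e : 0 < e -> ball x (e / (d%:R + 1)) y -> Defs.edist x y < e.
Proof.
move=> e0 [_ H].
have d1 : 0 < d%:R + 1 :> R by rewrite ltr_pwDr.
apply: (le_lt_trans (edist_le_sum x y)).
apply: (le_lt_trans (y := \sum_(i < d) (e / (d%:R + 1)))).
  apply: ler_sum => i _; apply: ltW; exact: (H ord0 i).
rewrite sumr_const card_ord -(mulr_natr (e / _)) mulrAC ltr_pdivrMr //.
by rewrite mulrDr mulr1 ltrDl.
Qed.

Lemma eball_open x e : open (eball x e : set 'rV[R]_d).
Proof.
rewrite openE => y Hy; rewrite /interior; apply/nbhs_ballP.
rewrite /eball /= in Hy.
have e0 : 0 < e - Defs.edist x y by rewrite subr_gt0.
exists ((e - Defs.edist x y) / (d%:R + 1)).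
  by rewrite /= divr_gt0 // ltr_pwDr.
move=> z /(@edist_ball y z _ e0) Hz; rewrite /eball /=.
have := edist_triangle x y z; lra.
Qed.

End Eucl.
Section Entropy.
Variable R : realType.

Lemma xlnx_ge (x : R) : 0 <= x -> - expR (-1) <= x * ln x.
Proof.
rewrite le_eqVlt => /orP[/eqP<-|x0].
  by rewrite mul0r oppr_le0 ltW // expR_gt0.
have := expR_ge1Dx (-1 - ln x).
rewrite expRD expRN lnK ?posrE // => H.
have : - ln x <= expR (-1) / x by lra.
rewrite ler_pdivlMr // => H2.
have := expR_gt0 (-1 : R).
nra.
Qed.

Lemma term_ge (p q : R) : 0 <= p -> 0 < q -> p * ln q + p - q <= p * ln p.
Proof.
move=> p0 q0; move: p0; rewrite le_eqVlt => /orP[/eqP<-|p0].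
  by rewrite !mul0r add0r sub0r oppr_le0 ltW.
have := expR_ge1Dx (ln q - ln p).
rewrite expRD expRN !lnK ?posrE // => H.
have : p * (1 + (ln q - ln p)) <= p * (q * p^-1) by rewrite ler_pM2l.
rewrite mulrCA mulfV ?gt_eqF // mulr1.
lra.
Qed.

Lemma entropy_bound (N : nat) (p : 'I_N -> R) : (forall i, 0 <= p i) ->
  - (\sum_i p i) * ln N%:R - expR (-1) <= \sum_i p i * ln (p i).
Proof.
case: N p => [|n] p p0.
  by rewrite !big_ord0 oppr0 mul0r sub0r oppr_le0 ltW // expR_gt0.
set N := n.+1; set m := \sum_i p i.
have m0 : 0 <= m by rewrite sumr_ge0.
have pm i : p i <= m.
  by rewrite /m (bigD1 i) //= lerDl sumr_ge0.
move: m0; rewrite le_eqVlt => /orP[/eqP m0|m0].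
  rewrite -m0 big1 => [|i _]; last first.
    have -> : p i = 0 by apply/eqP; rewrite eq_le p0 andbT m0 pm.
    by rewrite mul0r.
  by rewrite oppr0 mul0r sub0r oppr_le0 ltW // expR_gt0.
have N0' : 0 < N%:R :> R by rewrite ltr0n.
set q := m / N%:R.
have q0 : 0 < q by rewrite divr_gt0.
have H1 : \sum_i (p i * ln q + p i - q) <= \sum_i p i * ln (p i).
  by apply: ler_sum => i _; apply: term_ge.
have E : \sum_i (p i * ln q + p i - q) = m * ln q.
  rewrite sumrB big_split /= -mulr_suml sumr_const card_ord -/m.
  rewrite /q -(mulr_natr (m / _)) mulfVK ?gt_eqF //; ring.
rewrite E /q ln_div ?posrE // in H1.
have := @xlnx_ge m (ltW m0).
lra.
Qed.

End Entropy.
Section Cover.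
Variables (R : realType) (d : nat).

Lemma open_meas (U : set 'rV[R]_d) : open U -> measurable (U : set (Rd R d)).
Proof. move=> oU; exact: sub_sigma_algebra. Qed.

Lemma cover_ex (K A : set 'rV[R]_d) (r : R) : compact K -> A `<=` K -> 0 < r ->
  exists n, covers_by K A r n.
Proof.
move=> cK AK r0; rewrite compact_cover in cK.
have := cK _ K (fun x => (eball x r : set 'rV[R]_d)) (fun x _ => @eball_open R d x r).
case.
  move=> x Kx; exists x => //; by rewrite /eball /= (@edistxx R d).
move=> D' sub cov.
set s : seq 'rV[R]_d := finmap.enum_fset D'.
exists (size s), (fun i => nth 0 s i); split.
  move=> i; have := sub (nth 0 s i); rewrite in_setE; apply.
  exact: mem_nth.
move=> x /AK /cov [y /= yD' Hy].
have yi : (index y s < size s)%N by rewrite index_mem.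
exists (Ordinal yi) => //=.
by rewrite nth_index.
Qed.

Lemma Ncov_spec (K A : set 'rV[R]_d) (r : R) : (exists n, covers_by K A r n) ->
  covers_by K A r (Ncov K A r).
Proof.
move=> [n Hn]; rewrite /Ncov; case: pselect => [h|nh].
  by case: ex_minnP => m /asboolP.
by exfalso; apply: nh; exists n; apply/asboolP.
Qed.

End Cover.
Lemma meas_patch_cst (dd : measure_display) (T : measurableType dd) (R : realType)
  (D E : set T) (c : \bar R) : measurable E -> measurable_fun D (((cst c) \_ E) : T -> \bar R).
Proof.
move=> mE mD Y mY; apply: measurableI => //.
have mP (P : Prop) : measurable (fun _ : T => P).
  case: (pselect P) => p.
    by have -> : (fun _ : T => P) = setT by apply/seteqP; split.
  by have -> : (fun _ : T => P) = set0 by apply/seteqP; split.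
have -> : (cst c) \_ E @^-1` Y =
    (E `&` (fun _ => Y c)) `|` (~` E `&` (fun _ => Y point)).
  apply/seteqP; split => x; rewrite /preimage /patch /=;
    case: ifPn => [/set_mem xE|/negP xE].
  - by move=> yc; left; exact: (conj xE yc).
  - by move=> y0; right; split => // Ex; apply: xE; apply: mem_set.
  - by case=> [[]|[/(_ xE)]].
  - case=> [[Ex _]|[_ ?]] //; exfalso; apply: xE; exact: mem_set Ex.
by apply: measurableU; apply: measurableI => //; apply: measurableC.
Qed.
Theorem lemma6p1 (R : realType) (d : nat) (K A : set 'rV[R]_d)
    (mu : probability (Rd R d) R) (r : R) :
  compact K ->
  A `<=` K ->
  measurable (A : set (Rd R d)) ->
  mu (K : set (Rd R d)) = 1%E ->
  0 < r ->
  (\int[mu]_(x in (A : set (Rd R d))) lne (mu (eball x (2 * r))) >=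
    (- (fine (mu (nbhdK K A r)) * ln (Ncov K A r)%:R) - expR (-1))%:E)%E.
Proof.
move=> cK AK mA muK r0.
have [c [Kc cov]] := @Ncov_spec R d K A r (@cover_ex R d K A r cK AK r0).
move: c Kc cov; set N := Ncov K A r => c Kc cov.
pose c' (k : nat) : 'rV[R]_d := if insub k is Some i then c i else 0.
have c'E (i : 'I_N) : c' i = c i by rewrite /c' valK.
pose B (k : nat) : set (Rd R d) := eball (c' k) r.
pose Ai (k : nat) : set (Rd R d) := A `&` B k `&` ~` \bigcup_(j < k) B j.
have mB k : measurable (B k) by apply: open_meas; apply: eball_open.
have mAi k : measurable (Ai k).
  apply: measurableI; first exact: measurableI.
  by apply: measurableC; apply: bigcup_measurable => j _.
have AiA k : Ai k `<=` A by move=> x [[]].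
have tAi : trivIset setT Ai.
  move=> i j _ _ [x [[[_ Bi] nBi] [[_ Bj] nBj]]].
  case: (ltngtP i j) => // ij; exfalso.
    by apply: nBj; exists i.
  by apply: nBi; exists j.
have Aidx x : A x -> exists2 k, (k < N)%N & Ai k x.
  move=> Ax; have [i _ Hi] := cov x Ax.
  have exP : exists k, (k < N)%N && (x \in B k).
    by exists i; rewrite ltn_ord in_setE /B c'E.
  case: (ex_minnP exP) => k /andP[kN xB] kmin.
  exists k => //; split; first by split => //; rewrite -in_setE.
  move=> [j /= jk Bj]; have := kmin j; rewrite /= -(in_setE (B j)) in Bj; rewrite Bj andbT.
  by move=> /(_ (ltn_trans jk kN)); rewrite leqNgt jk.
have AU : (A : set (Rd R d)) = \big[setU/set0]_(i < N) Ai i.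
  rewrite -bigcup_mkord; apply/seteqP; split.
    by move=> x Ax; have [k kN Hk] := Aidx x Ax; exists k.
  by move=> x [k _ /AiA].
have muA : mu A = \sum_(i < N) mu (Ai i).
  by rewrite {1}AU measure_bigsetU.
have mu_le1 (S : set (Rd R d)) : measurable S -> (mu S <= 1)%E.
  exact: probability_le1.
have mu_fin (S : set (Rd R d)) : measurable S -> mu S \is a fin_num.
  move=> mS; rewrite ge0_fin_numE ?measure_ge0 //.
  exact: (le_lt_trans (mu_le1 _ mS)) (ltry _).
have mball x s : measurable (eball x s : set (Rd R d)).
  by apply: open_meas; apply: eball_open.
set f := fun x => lne (mu (eball x (2 * r))).
have f_le0 x : (f x <= 0)%E by rewrite /f lne_le0 mu_le1.
have AiBall k x : Ai k x -> Ai k `<=` eball x (2 * r).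
  move=> [[_ Bx] _] y [[_ By] _]; rewrite /eball /=.
  rewrite /B /eball /= in Bx By.
  have := @edist_triangle R d x (c' k) y; rewrite (@edistC R d x (c' k)).
  lra.
pose cc (k : nat) : \bar R := (- lne (mu (Ai k)))%E.
have cc0 k : (0 <= cc k)%E by rewrite /cc leeNr oppe0 lne_le0 mu_le1.
pose h (x : Rd R d) : \bar R := (\sum_(i < N) (cst (cc i)) \_ (Ai i) x)%E.
have patch0 i x : (0 <= (cst (cc i)) \_ (Ai i) x)%E.
  by rewrite /patch; case: ifP => _ //; exact: cc0.
have h0 x : (0 <= h x)%E by apply: sume_ge0 => i _.
have fneg_le x : A x -> (f^\- x <= h x)%E.
  move=> Ax; have [k kN Hk] := Aidx x Ax.
  rewrite funenegE; have -> : maxe (- f x)%E 0%E = (- f x)%E.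
    by apply/max_idPl; rewrite leeNr oppe0.
  apply: (@le_trans _ _ (cc k)).
    rewrite /cc leeN2 /f lee_lne ?in_itv /= ?measure_ge0 ?leey //.
    by apply: le_measure; rewrite ?inE //; apply: AiBall.
  rewrite /h (bigD1 (Ordinal kN)) //= /patch mem_set //=.
  apply: leeDl; apply: sume_ge0 => i _; case: ifP => _ //; exact: cc0.
have I1 : (\int[mu]_(x in (A : set (Rd R d))) f x =
          - \int[mu]_(x in (A : set (Rd R d))) f^\- x)%E.
  rewrite integralE (eq_integral (cst 0)) ?integral0 ?sub0e //.
  by move=> x _; rewrite funeposE; apply/max_idPr.
have I2 : (\int[mu]_(x in (A : set (Rd R d))) f^\- x <=
           \int[mu]_(x in (A : set (Rd R d))) h x)%E.
  rewrite ge0_integralE; last by move=> x _; exact: funeneg_ge0.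
  rewrite ge0_integralE; last by move=> x _; exact: h0.
  apply: ereal_sup_le => _ [g Hg <-]; exists g => //= x.
  apply: (le_trans (Hg x)); rewrite /patch; case: ifP => //.
  by rewrite in_setE => xA; apply: fneg_le.
have I3 : (\int[mu]_(x in (A : set (Rd R d))) h x =
          \sum_(i < N) cc i * mu (Ai i))%E.
  rewrite /h ge0_integral_sum //.
  - apply: eq_bigr => i _.
    by rewrite -integral_mkcondr (setIidr (AiA i)) integral_cst.
  - by move=> i; apply: meas_patch_cst.
pose p (i : 'I_N) := fine (mu (Ai i)).
have pE (i : 'I_N) : mu (Ai i) = (p i)%:E by rewrite fineK // mu_fin.
have p0 (i : 'I_N) : 0 <= p i by rewrite fine_ge0 // measure_ge0.
have termE (i : 'I_N) : (cc i * mu (Ai i))%E = (- (p i * ln (p i)))%:E.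
  rewrite /cc pE; move: (p0 i); rewrite le_eqVlt => /orP[/eqP<-|pi0].
    by rewrite le0_lneNy // mul0r oppr0 mule0.
  by rewrite lne_EFin // -EFinN -EFinM; congr EFin; ring.
have sumE : (\sum_(i < N) cc i * mu (Ai i))%E = (\sum_(i < N) - (p i * ln (p i)))%:E.
  by rewrite (eq_bigr _ (fun i _ => termE i)) sumEFin.
have sump : \sum_(i < N) p i = fine (mu A).
  by rewrite muA (eq_bigr _ (fun i _ => pE i)) sumEFin.
have ent := @entropy_bound R N p p0.
have nbE : nbhdK K A r = (K : set (Rd R d)) `&` \bigcup_(a in A) (eball a r : set 'rV[R]_d).
  apply/seteqP; split.
    by move=> x [Kx [a Aa xa]]; split => //; exists a => //; rewrite /eball /= edistC.
  by move=> x [Kx [a Aa xa]]; split => //; exists a => //; rewrite edistC.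
have mnb : measurable (nbhdK K A r).
  rewrite nbE; apply: measurableI.
    rewrite -[K]setCK; apply: measurableC; apply: open_meas.
    by apply: closed_openC; apply: compact_closed => //; exact: norm_hausdorff.
  by apply: open_meas; apply: bigcup_open => a _; apply: eball_open.
have Anb : (A : set (Rd R d)) `<=` nbhdK K A r.
  by move=> x Ax; split; [exact: AK | exists x => //; rewrite edistxx].
have mle : fine (mu A) <= fine (mu (nbhdK K A r)).
  apply: fine_le; rewrite ?inE ?mu_fin //.
  by apply: le_measure; rewrite ?inE.
have lnN : 0 <= ln N%:R :> R.
  case: (posnP N) => [->|N0]; first by rewrite ln0.
  by apply: ln_ge0; rewrite ler1n.
have J : (\int[mu]_(x in (A : set (Rd R d))) f^\- x <=
          (\sum_(i < N) - (p i * ln (p i)))%:E)%E.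
  by rewrite -sumE -I3.
rewrite I1 leeNr (le_trans J) // -EFinN lee_fin sumrN.
rewrite sump in ent.
have := ler_wpM2r lnN mle.
lra.
Qed.
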